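(* Let $n \ge q \ge 1$ be integers and let $r = \lceil n/q \rceil$. Then the optimal competitive ratio of the parallelized greedy algorithm with $n$ agents and at most $q$ iterations is \[ \rho(n,q) = \begin{cases} \frac{1}{r} & \text{if } n \equiv 1 \pmod q,\\ \frac{1}{r+1} & \text{otherwise.}\end{cases} \] Moreover, this value is attained by the following iteration assignment $P^*_{n,q}$: if $n \equiv 1 \pmod q$, then $P^*_{n,q}(i) = \lceil i/(r-1) \rceil$ for $i<n$ and $P^*_{n,q}(n) = q$; otherwise, $P^*_{n,q}(i) = \lceil i/r \rceil$ for all $i \in [n]$.
   Context: A set function $f: 2^S \to \mathbb{R}_{\ge 0}$ on a finite base set $S$ is normalized if $f(\emptyset)=0$, monotone if $f(\{e\}\mid A)\ge 0$ for all $e\in S$, $A\subseteq S$, and submodular if $f(\{e\}\mid A) \ge f(\{e\}\mid B)$ for all $A\subseteq B\subseteq S$ and $e\in S\setminus B$, where $f(A\mid B) = f(A\cup B)-f(B)$. Let $\mathcal{F}$ be the set of normalized, monotone, submodular functions. There are $n$ agents $N=[n]=\{1,\dots,n\}$; agent $i$ has a decision set $X_i\subseteq S$, with $X_1,\dots,X_n$ a partition of $S$. An action profile is $x=(x_1,\dots,x_n)\in X = X_1\times\cdots\times X_n$, valued as $f(x) = f(\{x_1,\dots,x_n\})$; for $M\subseteq N$, $x_M$ denotes $\{x_i : i\in M\}$. Let $x^{\mathrm{opt}}\in\arg\max_{x\in X} f(x)$. An iteration assignment is a function $P:[n]\to[q]$ with $P(i)\le P(j)$ whenever $i<j$; $\mathcal{P}_{n,q}$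 denotes the set of such assignments. The parallelized greedy algorithm with assignment $P$ produces $x^{\mathrm{sol}}$ with $x^{\mathrm{sol}}_i \in \arg\max_{x_i\in X_i} f(x_i \mid x^{\mathrm{sol}}_{\mathcal{N}_i})$, where $\mathcal{N}_i = \{j : P(j) < P(i)\}$; when several greedy outcomes are possible, $x^{\mathrm{sol}}$ is taken to be the worst one (smallest $f$-value). Define $\gamma(f,X,P) = f(x^{\mathrm{sol}})/f(x^{\mathrm{opt}})$, $\gamma(P) = \inf_{f\in\mathcal{F},X}\gamma(f,X,P)$ (infimum over all finite $S$, all such $f$ and all decision sets), and $\rho(n,q) = \sup_{P\in\mathcal{P}_{n,q}}\gamma(P)$. *)

(* Defs.v *)
From HB Require Import structures.
From mathcomp Require Import all_boot all_order all_algebra.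
From mathcomp Require Import classical_sets reals.
Set Implicit Arguments. Unset Strict Implicit. Unset Printing Implicit Defensive.
Import Order.TTheory GRing.Theory Num.Theory.
Local Open Scope classical_set_scope.
Local Open Scope ring_scope.

Definition ceil_div (a b : nat) : nat := ((a + b).-1 %/ b)%N.

Section Defs.
Variable R : realType.

Definition marg (S : finType) (f : {set S} -> R) (A B : {set S}) : R :=
  f (A :|: B) - f B.

Definition normalized (S : finType) (f : {set S} -> R) := f finset.set0 = 0.
Definition nonneg_fun (S : finType) (f : {set S} -> R) := forall A, 0 <= f A.
Definition monotone_fun (S : finType) (f : {set S} -> R) :=
  forall (e : S) (A : {set S}), 0 <= marg f [set e] A.
Definition submodular (S : finType) (f : {set S} -> R) :=
  forall (A B : {set S}) (e : S), A \subset B -> e \notin B ->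
    marg f [set e] B <= marg f [set e] A.

Definition in_F (S : finType) (f : {set S} -> R) :=
  [/\ nonneg_fun f, normalized f, monotone_fun f & submodular f].

(* Agents are 'I_n; agent i : 'I_n is agent (i+1) of the paper.
   The partition X_1,...,X_n of S is encoded by blk : S -> 'I_n, with
   X_{i+1} = [set e | blk e == i]; blocks are required to be nonempty. *)
Definition valid_partition (n : nat) (S : finType) (blk : S -> 'I_n) :=
  forall i : 'I_n, exists e : S, blk e = i.

Definition profile (n : nat) (S : finType) (blk : S -> 'I_n) (x : 'I_n -> S) :=
  forall i, blk (x i) = i.

Definition pset (n : nat) (S : finType) (x : 'I_n -> S) : {set S} :=
  [set x i | i : 'I_n].

(* the set x_M for M = N_i = {j | P(j) < P(i)}  (P is 1-based) *)
Definition pred_set (n : nat) (P : nat -> nat) (S : finType) (x : 'I_n -> S)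
  (i : 'I_n) : {set S} :=
  [set x j | j in [set j : 'I_n | (P j.+1 < P i.+1)%N]].

Definition greedy (n : nat) (P : nat -> nat) (S : finType) (blk : S -> 'I_n)
  (f : {set S} -> R) (x : 'I_n -> S) :=
  profile blk x /\
  forall (i : 'I_n) (e : S), blk e = i ->
    marg f [set e] (pred_set P x i) <= marg f [set x i] (pred_set P x i).

Definition fopt (n : nat) (S : finType) (blk : S -> 'I_n) (f : {set S} -> R) : R :=
  sup [set f (pset x) | x in [set x | profile blk x]].

Definition fsol (n : nat) (P : nat -> nat) (S : finType) (blk : S -> 'I_n)
  (f : {set S} -> R) : R :=
  inf [set f (pset x) | x in [set x | greedy P blk f x]].

Definition gamma_inst (n : nat) (P : nat -> nat) (S : finType) (blk : S -> 'I_n)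
  (f : {set S} -> R) : R := fsol P blk f / fopt blk f.

Definition gammaP (n : nat) (P : nat -> nat) : R :=
  inf [set g | exists (S : finType) (blk : S -> 'I_n) (f : {set S} -> R),
         [/\ in_F f, valid_partition blk, 0 < fopt blk f & g = gamma_inst P blk f]].

(* P in P_{n,q}: P : [n] -> [q] nondecreasing (only values on 1..n matter) *)
Definition is_assignment (n q : nat) (P : nat -> nat) :=
  (forall i, (1 <= i <= n)%N -> (1 <= P i <= q)%N) /\
  (forall i j, (1 <= i)%N -> (i < j)%N -> (j <= n)%N -> (P i <= P j)%N).

Definition rho (n q : nat) : R :=
  sup [set gammaP n P | P in [set P | is_assignment n q P]].

End Defs.

Definition Pstar (n q : nat) (i : nat) : nat :=
  let r := ceil_div n q in
  if n == 1 %[mod q] then (if (i < n)%N then ceil_div i (r - 1) else q)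
  else ceil_div i r.

(* Main.v *)
Require Import Defs.
From HB Require Import structures.
From mathcomp Require Import all_boot all_order all_algebra.
From mathcomp Require Import classical_sets reals.
From mathcomp Require Import finset fintype bigop.
From Stdlib Require Classical_Prop.
From mathcomp Require Import zify.
From Stdlib Require Import Lia.
Import Order.TTheory GRing.Theory Num.Theory.
Local Open Scope ring_scope.
Set Implicit Arguments. Unset Strict Implicit. Unset Printing Implicit Defensive.

Section Generic.
Variables (R : realType) (S : finType) (f : {set S} -> R).

Lemma set_cons (a : S) s : [set e | e \in a :: s] = a |: [set e | e \in s].
Proof. by apply/setP => e; rewrite !inE. Qed.

Lemma mono_seq (hm : monotone_fun f) C (s : seq S) : f C <= f ([set e | e \in s] :|: C).
Proof.
elim: s => [|a s IH].
  have -> : [set e | e \in ([::] : seq S)] = set0 :> {set S} by apply/setP => e; rewrite !inE.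
  by rewrite set0U.
rewrite set_cons -setUA; apply: (le_trans IH).
by have := hm a ([set e | e \in s] :|: C); rewrite /marg subr_ge0.
Qed.

Lemma mono_sub (hm : monotone_fun f) (A B : {set S}) : A \subset B -> f A <= f B.
Proof.
move=> sAB.
have -> : B = [set e | e \in enum (B :\: A)] :|: A.
  apply/setP => e; rewrite !inE mem_enum !inE.
  by case eA: (e \in A); rewrite ?orbT ?orbF ?andbT //= (subsetP sAB).
exact: mono_seq.
Qed.

Lemma marg_anti (hm : monotone_fun f) (hs : submodular f) (A B : {set S}) e :
  A \subset B -> marg f [set e] B <= marg f [set e] A.
Proof.
move=> sAB; case eB: (e \in B); last by apply: hs => //; rewrite eB.
have -> : marg f [set e] B = 0.
  by rewrite /marg (finset.setUidPr _) ?subrr // finset.sub1set.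
exact: hm.
Qed.

Lemma union_bound (hm : monotone_fun f) (hs : submodular f) (B : {set S}) (s : seq S) :
  f ([set e | e \in s] :|: B) <= f B + \sum_(e <- s) marg f [set e] B.
Proof.
elim: s => [|a s IH].
  have -> : [set e | e \in ([::] : seq S)] = set0 :> {set S} by apply/setP => e; rewrite !inE.
  by rewrite set0U big_nil addr0.
rewrite set_cons -setUA big_cons.
have h1 : f ([set a] :|: ([set e | e \in s] :|: B)) =
   f ([set e | e \in s] :|: B) + marg f [set a] ([set e | e \in s] :|: B).
  by rewrite /marg addrC subrK.
have h2 := marg_anti hm hs a (subsetUr [set e | e \in s] B).
rewrite h1; apply: le_trans (lerD IH h2) _.
by rewrite -addrA [X in _ + X]addrC.
Qed.

End Generic.

Section Greedy.
Variables (R : realType) (n q : nat) (P : nat -> nat) (S : finType)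
  (blk : S -> 'I_n) (f : {set S} -> R).

Definition Xlt (x : 'I_n -> S) (t : nat) : {set S} :=
  [set x j | j in [set j : 'I_n | (P j.+1 < t)%N]].

Lemma Xlt_sub x t1 t2 : (t1 <= t2)%N -> Xlt x t1 \subset Xlt x t2.
Proof.
move=> h; apply: imsetS; apply/subsetP => j; rewrite !inE => hj.
exact: leq_trans hj h.
Qed.

Lemma Xlt_step x (i : 'I_n) : x i |: Xlt x (P i.+1) \subset Xlt x (P i.+1).+1.
Proof.
rewrite subUset finset.sub1set Xlt_sub // andbT.
by apply/imsetP; exists i => //; rewrite inE.
Qed.

Lemma P_mono (hP : is_assignment n q P) (i j : 'I_n) :
  (i <= j)%N -> (P i.+1 <= P j.+1)%N.
Proof.
case: hP => _ h; rewrite leq_eqVlt => /orP [/eqP e|hlt].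
  by have -> : i = j by apply: val_inj.
by apply: h => //; exact: ltn_ord.
Qed.

Lemma P_lt (hP : is_assignment n q P) (i j : 'I_n) :
  (P j.+1 < P i.+1)%N -> (j < i)%N.
Proof. move=> h; rewrite ltnNge; apply/negP => hij; move: h. by rewrite ltnNge (P_mono hP hij). Qed.

Lemma P_le_L (hP : is_assignment n q P) (i : 'I_n) : (P i.+1 <= P n)%N.
Proof.
case: hP => _ h; have := ltn_ord i; rewrite leq_eqVlt => /orP [/eqP e|hlt].
  by rewrite e.
by apply: h.
Qed.

End Greedy.

Section Bound.
Variables (R : realType) (n q : nat) (P : nat -> nat) (S : finType)
  (blk : S -> 'I_n) (f : {set S} -> R).

Lemma pred_setE (x : 'I_n -> S) (i : 'I_n) :
  Defs.pred_set P x i = Xlt P x (P i.+1).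
Proof.
apply/setP => e; apply/imsetP/imsetP => [][j hj ->]; exists j => //; move: hj;
  by rewrite ?inE ?in_setE.
Qed.

Lemma greedy_bound (hF : in_F f) (hP : is_assignment n q P) x o (c c' : nat) :
  greedy P blk f x -> profile blk o ->
  (forall t, (t < P n)%N -> (#|[set i : 'I_n | P i.+1 == t]| <= c)%N) ->
  (#|[set i : 'I_n | P i.+1 == P n]| <= c')%N ->
  f (pset o) <= c.+1%:R * f (Xlt P x (P n)) +
                c'%:R * (f (Xlt P x (P n).+1) - f (Xlt P x (P n))).
Proof.
case: hF => hnn hnorm hm hs hg ho hc hc'.
set L := P n.
set G := fun t => f (Xlt P x t).
have hD : forall t, 0 <= G t.+1 - G t.
  by move=> t; rewrite subr_ge0; apply: mono_sub => //; apply: Xlt_sub.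
have step1 : f (pset o) <= G L + \sum_i marg f [set o i] (Xlt P x L).
  have e1 : pset o = [set e | e \in [seq o i | i <- enum 'I_n]].
    apply/setP => e; rewrite inE; apply/imsetP/mapP => [[i _ ->]|[i _ ->]];
      exists i => //; rewrite ?mem_enum //; exact: mem_index_enum.
  apply: le_trans (mono_sub hm (subsetUl (pset o) (Xlt P x L))) _.
  rewrite e1; apply: le_trans (union_bound hm hs _ _) _.
  by rewrite big_map big_enum.
have step2 : forall i : 'I_n, marg f [set o i] (Xlt P x L) <= G (P i.+1).+1 - G (P i.+1).
  move=> i.
  apply: le_trans (marg_anti hm hs (o i) (Xlt_sub P x (P_le_L hP i))) _.
  case: hg => _ hg; have h := hg i (o i) (ho i).
  have e : Defs.pred_set P x i = Xlt P x (P i.+1) by apply: pred_setE.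
  rewrite e in h; apply: le_trans h _.
  rewrite /marg lerB //; apply: mono_sub => //; exact: Xlt_step.
have hlt : forall i : 'I_n, (P i.+1 < L.+1)%N by move=> i; rewrite ltnS; exact: (P_le_L hP i).
have step3 : \sum_(i : 'I_n) (G (P i.+1).+1 - G (P i.+1)) =
   \sum_(t < L.+1) #|[set i : 'I_n | P i.+1 == t]|%:R * (G t.+1 - G t).
  rewrite (partition_big (fun i : 'I_n => Ordinal (hlt i)) predT) //=.
  apply: eq_bigr => t _.
  rewrite (eq_bigr (fun _ => G t.+1 - G t)); last first.
    by move=> i /eqP <-.
  transitivity (\sum_(i in [set i : 'I_n | P i.+1 == t]) (G t.+1 - G t)).
    by apply: eq_bigl => i; rewrite inE -val_eqE.
  by rewrite sumr_const mulr_natl.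
have step4 : \sum_(t < L.+1) #|[set i : 'I_n | P i.+1 == t]|%:R * (G t.+1 - G t)
    <= c%:R * \sum_(t < L) (G t.+1 - G t) + c'%:R * (G L.+1 - G L).
  rewrite big_ord_recr /= mulr_sumr; apply: lerD.
    apply: ler_sum => t _; apply: ler_wpM2r => //; rewrite ler_nat; apply: hc.
    exact: ltn_ord.
  by apply: ler_wpM2r => //; rewrite ler_nat.
have step5 : \sum_(t < L) (G t.+1 - G t) = G L - G 0.
  by rewrite -(big_mkord xpredT (fun t => G t.+1 - G t)) telescope_sumr.
have hG0 : 0 <= G 0 := hnn _.
have hS : \sum_(i : 'I_n) marg f [set o i] (Xlt P x L) <=
          \sum_(i : 'I_n) (G (P i.+1).+1 - G (P i.+1)).
  by apply: ler_sum => i _; exact: step2.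
rewrite step3 in hS; have hT := le_trans hS step4; rewrite step5 in hT.
have h1 : f (pset o) <= G L + (c%:R * (G L - G 0) + c'%:R * (G L.+1 - G L)).
  by apply: le_trans step1 _; rewrite lerD2l.
apply: le_trans h1 _.
have -> : c.+1%:R = c%:R + 1 :> R by rewrite -addn1 natrD.
rewrite -/(G L) -/(G L.+1) mulrDl mul1r addrA lerD2r addrC lerD2r.
by rewrite ler_wpM2l // lerBlDr lerDl.
Qed.
End Bound.

Section Exists.
Variables (R : realType) (n q : nat) (P : nat -> nat) (S : finType)
  (blk : S -> 'I_n) (f : {set S} -> R).

Lemma greedy_exists (hP : is_assignment n q P) (hv : valid_partition blk) :
  exists x, greedy P blk f x.
Proof.
have hv' : forall i, exists e, blk e == i by move=> i; case: (hv i) => e <-; exists e.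
pose x0 i := xchoose (hv' i).
have hx0 : profile blk x0 by move=> i; apply/eqP; exact: (xchooseP (hv' i)).
suff: forall k, (k <= n)%N -> exists x, profile blk x /\
   forall i : 'I_n, (i < k)%N -> forall e, blk e = i ->
     marg f [set e] (Defs.pred_set P x i) <= marg f [set x i] (Defs.pred_set P x i).
  move=> /(_ n (leqnn n)) [x [hx hg]]; exists x; split => // i e he.
  by apply: hg => //; exact: ltn_ord.
elim => [_|k IH hk]; first by exists x0; split.
have [x [hx hg]] := IH (ltnW hk).
pose i0 : 'I_n := Ordinal hk.
pose B := Defs.pred_set P x i0.
have hxi0 : (fun e => blk e == i0) (x i0) by apply/eqP; exact: hx.
case: (@arg_maxP _ _ _ (x i0) (fun e => blk e == i0) (fun e => marg f [set e] B) hxi0) => es hes hmax.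
pose x' j := if j == i0 then es else x j.
have hps : forall i : 'I_n, (i <= k)%N -> Defs.pred_set P x' i = Defs.pred_set P x i.
  move=> i hi; rewrite !pred_setE; apply: eq_in_imset => j; rewrite inE => hj.
  rewrite /x'; case: eqP => // ej; exfalso.
  have := P_lt hP hj; rewrite ej /= => h.
  by have := leq_trans h hi; rewrite ltnn.
exists x'; split.
  by move=> j; rewrite /x'; case: eqP => [->|_]; [exact/eqP|exact: hx].
move=> i; rewrite ltnS => hi e he; rewrite hps //.
rewrite /x'; case: eqP => [ei|nei].
  rewrite ei; apply: hmax; apply/eqP; rewrite he ei //.
apply: hg => //; rewrite ltn_neqAle hi andbT.
by apply/eqP => eik; apply: nei; apply: val_inj.
Qed.

End Exists.

Section Cover.
Variables (R : realType) (K S : finType) (cov : K -> S -> bool).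

Definition cf (A : {set S}) : R := \sum_(k : K) ([exists e in A, cov k e] : nat)%:R.

Lemma ex_setU1 k (e : S) (B : {set S}) :
  [exists e' in [set e] :|: B, cov k e'] = cov k e || [exists e' in B, cov k e'].
Proof.
apply/existsP/orP => [[e' /andP [he' hc]]|[hc|/existsP [e' /andP [he' hc]]]].
- move: he'; rewrite !inE => /orP [/eqP <-|hB]; first by left.
  by right; apply/existsP; exists e'; rewrite hB.
- by exists e; rewrite !inE eqxx.
- by exists e'; rewrite !inE he' orbT.
Qed.

Lemma marg_cf (e : S) (B : {set S}) :
  marg cf [set e] B = \sum_(k : K) (cov k e && ~~ [exists e' in B, cov k e'] : nat)%:R.
Proof.
rewrite /marg /cf -sumrB; apply: eq_bigr => k _; rewrite ex_setU1.
by case: (cov k e); case: [exists e' in B, cov k e']; rewrite /= ?subrr ?subr0.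
Qed.

Lemma cf_single (e : S) : cf [set e] = \sum_(k : K) (cov k e : nat)%:R.
Proof.
apply: eq_bigr => k _; congr (_ %:R); congr (nat_of_bool _).
apply/existsP/idP => [[e' /andP [he' hc]]|hc]; last by exists e; rewrite inE eqxx.
by move: he'; rewrite inE => /eqP <-.
Qed.

Lemma cf_inF : in_F cf.
Proof.
split.
- by move=> A; apply: sumr_ge0 => k _; apply: ler0n.
- rewrite /normalized /cf; apply: big1 => k _.
  have -> : [exists e in finset.set0, cov k e] = false.
    by apply/existsP => [[e /andP [he _]]]; rewrite inE in he.
  by [].
- by move=> e A; rewrite marg_cf; apply: sumr_ge0 => k _; apply: ler0n.
- move=> A B e sAB eB; rewrite !marg_cf; apply: ler_sum => k _; rewrite ler_nat.
  case: (cov k e) => //=.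
  case hB: [exists e' in B, cov k e'] => //=.
  case hA: [exists e' in A, cov k e'] => //=.
  move: hA => /existsP [e' /andP [he' hc]].
  have : [exists e' in B, cov k e'] by apply/existsP; exists e'; rewrite (subsetP sAB).
  by rewrite hB.
Qed.

End Cover.

Section SupInf.
Variables (R : realType) (n q : nat) (P : nat -> nat) (S : finType)
  (blk : S -> 'I_n) (f : {set S} -> R).

Lemma profile_exists (hv : valid_partition blk) : exists o, profile blk o.
Proof.
have hv' : forall i, exists e, blk e == i by move=> i; case: (hv i) => e <-; exists e.
by exists (fun i => xchoose (hv' i)) => i; apply/eqP; exact: (xchooseP (hv' i)).
Qed.

Lemma fopt_ge (hF : in_F f) o : profile blk o -> f (pset o) <= fopt blk f.
Proof.
case: hF => hnn hnorm hm hs ho.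
apply: ub_le_sup; last by exists o.
exists (f [set: S]) => y [x _ <-]; apply: mono_sub => //; exact: subsetT.
Qed.

Lemma fopt_le (hv : valid_partition blk) (B : R) :
  (forall o, profile blk o -> f (pset o) <= B) -> fopt blk f <= B.
Proof.
move=> h; apply: ge_sup.
  by case: (profile_exists hv) => o ho; exists (f (pset o)); exists o.
by move=> y [x hx <-]; apply: h.
Qed.

Lemma fsol_le (hF : in_F f) x : greedy P blk f x -> fsol P blk f <= f (pset x).
Proof.
case: hF => hnn hnorm hm hs hx.
apply: ge_inf; last by exists x.
by exists 0 => y [z _ <-]; apply: hnn.
Qed.

Lemma fsol_ge (hP : is_assignment n q P) (hv : valid_partition blk) (B : R) :
  (forall x, greedy P blk f x -> B <= f (pset x)) -> B <= fsol P blk f.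
Proof.
move=> h; apply: lb_le_inf.
  by case: (greedy_exists f hP hv) => x hx; exists (f (pset x)); exists x.
by move=> y [x hx <-]; apply: h.
Qed.

End SupInf.

Section Instance.
Variables (R : realType) (n q : nat) (P : nat -> nat) (t : nat) (hasj : bool) (jj : 'I_n).

Definition TT : {set 'I_n} := [set i : 'I_n | P i.+1 == t].

Definition covI (k : 'I_n.+1) (e : 'I_n * bool) : bool :=
  if val k == 0%N then ~~ e.2 && ((e.1 \in TT) || (hasj && (e.1 == jj)))
  else [&& e.2, val k == (val e.1).+1 & e.1 \in TT].

Definition fI : {set ('I_n * bool)} -> R := @cf R _ _ covI.
Definition blkI (e : 'I_n * bool) : 'I_n := e.1.
Definition xs (i : 'I_n) : 'I_n * bool := (i, false).
Definition os (i : 'I_n) : 'I_n * bool := (i, i \in TT).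

Lemma validI : valid_partition blkI.
Proof. by move=> i; exists (i, false). Qed.

Lemma fI_single_true (i : 'I_n) : fI [set (i, true)] <= ((i \in TT) : nat)%:R.
Proof.
rewrite /fI cf_single big_ord_recl /= /covI /= add0r.
rewrite (bigD1 i) //= big1 ?addr0 /=.
  by rewrite !eqxx /=.
move=> k hk; rewrite /bump /= add1n eqSS.
by case: eqP => // e; case/eqP: hk; apply: val_inj.
Qed.

Lemma greedyI (hP : is_assignment n q P) (hj : hasj -> (t < P jj.+1)%N) :
  greedy P blkI fI xs.
Proof.
split => // i [e1 b] /= he; rewrite he {e1 he}.
case: b; last exact: lexx.
case: (@cf_inF R _ _ covI) => hnn hnorm hm hs.
have hR0 : 0 <= marg fI [set xs i] (Defs.pred_set P xs i) by apply: hm.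
apply: le_trans (marg_anti hm hs _ (sub0set _)) _.
have -> : marg fI [set (i, true)] set0 = fI [set (i, true)].
  by rewrite /marg /fI setU0 hnorm subr0.
apply: le_trans (fI_single_true i) _.
case hi: (i \in TT) => //=.
rewrite /fI marg_cf big_ord_recl /=.
rewrite big1_eq addr0 ler1n lt0b /covI /= hi /=.
apply/negP => /existsP [e' /andP [he' hc]].
move: he'; rewrite pred_setE => /imsetP [j]; rewrite inE => hj' ej; rewrite ej /= in hc.
move: hi hc; rewrite !inE => /eqP hi /orP [/eqP hjt|/andP [hh /eqP ejj]].
  by move: hj'; rewrite hjt hi ltnn.
by move: (hj hh); rewrite -ejj -hi => h; have := ltn_trans h hj'; rewrite ltnn.
Qed.

Lemma fI_xs : fI (pset xs) <= 1.
Proof.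
rewrite /fI /cf big_ord_recl /= big1 ?addr0; first by case: ([exists e in pset xs, covI ord0 e]); rewrite /= ?lexx ?ler01.
move=> k _; apply/eqP; rewrite pnatr_eq0 eqb0; apply/negP => /existsP [e /andP [he hc]].
by move: he hc => /imsetP [j _ ->].
Qed.

Lemma cardTT : #|TT|%:R = \sum_(k : 'I_n) ((k \in TT) : nat)%:R :> R.
Proof.
rewrite -sum1_card natr_sum big_mkcond /=; apply: eq_bigr => k _.
by case: (k \in TT).
Qed.

Lemma fI_os (hj : hasj -> (t < P jj.+1)%N) : (#|TT| + hasj)%:R <= fI (pset os).
Proof.
rewrite /fI /cf big_ord_recl natrD addrC; apply: lerD.
  case hh: hasj; last by rewrite /= ler0n.
  rewrite ler_nat lt0b; apply/existsP; exists (os jj).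
  rewrite imset_f //= /covI /= /os /=.
  have -> : (jj \in TT) = false.
    by rewrite inE; apply/negP => /eqP e; move: (hj hh); rewrite e ltnn.
  by rewrite hh eqxx.
rewrite cardTT; apply: ler_sum => k _; rewrite ler_nat.
case hk: (k \in TT) => //=; rewrite lt0b; apply/existsP; exists (os k).
by rewrite imset_f //= /covI /= /os hk /= eqxx.
Qed.

Lemma inst_gamma (hP : is_assignment n q P) (hj : hasj -> (t < P jj.+1)%N)
  (hm0 : (0 < #|TT| + hasj)%N) :
  0 < fopt blkI fI /\ gamma_inst P blkI fI <= 1 / (#|TT| + hasj)%:R.
Proof.
have hF := @cf_inF R _ _ covI.
have hpr : profile blkI os by [].
have h1 : (#|TT| + hasj)%:R <= fopt blkI fI := le_trans (fI_os hj) (fopt_ge hF hpr).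
have hpos : 0 < (#|TT| + hasj)%:R :> R by rewrite ltr0n.
have hfo : 0 < fopt blkI fI := lt_le_trans hpos h1.
split => //.
have hs1 : fsol P blkI fI <= 1 := le_trans (fsol_le hF (greedyI hP hj)) fI_xs.
rewrite /gamma_inst ler_pdivrMr //; apply: le_trans hs1 _.
by rewrite mul1r mulrC ler_pdivlMr // mul1r.
Qed.

End Instance.

Section GammaP.
Variables (R : realType) (n q : nat) (P : nat -> nat).

Lemma gamma_ge0 (hP : is_assignment n q P) (S : finType) (blk : S -> 'I_n)
  (f : {set S} -> R) : in_F f -> valid_partition blk -> 0 < fopt blk f ->
  0 <= gamma_inst P blk f.
Proof.
move=> hF hv hfo; rewrite /gamma_inst divr_ge0 ?(ltW hfo) //.
apply: (fsol_ge hP hv) => x _; case: hF => hnn _ _ _; exact: hnn.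
Qed.

Lemma gammaP_lb (hP : is_assignment n q P) :
  has_lbound [set g | exists (S : finType) (blk : S -> 'I_n) (f : {set S} -> R),
         [/\ in_F f, valid_partition blk, 0 < fopt blk f & g = gamma_inst P blk f]].
Proof.
by exists 0 => y [S [blk [f [hF hv hfo ->]]]]; apply: gamma_ge0.
Qed.

Lemma gammaP_le (hP : is_assignment n q P) t (hasj : bool) (jj : 'I_n)
  (hj : hasj -> (t < P jj.+1)%N) (hm0 : (0 < #|TT n P t| + hasj)%N) :
  gammaP R n P <= 1 / (#|TT n P t| + hasj)%:R.
Proof.
have [hfo hg] := inst_gamma R hP hj hm0.
apply: le_trans hg; apply: (ge_inf (gammaP_lb hP)).
exists _, (@blkI n), (fI R P t hasj jj); split => //.
- exact: cf_inF.
- exact: validI.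
Qed.

End GammaP.

Section Comb.
Variables (n q : nat) (P : nat -> nat).

Lemma g_step t : #|[set i : 'I_n | (P i.+1 < t.+1)%N]| =
   (#|[set i : 'I_n | (P i.+1 < t)%N]| + #|TT n P t|)%N.
Proof.
rewrite -(cardsID [set i : 'I_n | (P i.+1 < t)%N] [set i : 'I_n | (P i.+1 < t.+1)%N]).
congr (_ + _)%N; apply: eq_card => i; rewrite !inE ltnS.
  by case h: (P i.+1 < t)%N; rewrite ?andbF // andbT ltnW.
by rewrite -ltnNge andbC -eqn_leq.
Qed.

Lemma round_exists (hP : is_assignment n q P) (hn : (0 < n)%N) (target : nat)
  (harith : forall M, (M < q)%N -> (target * M.+1 < n + 2 * M + 1)%N) :
  exists t (hasj : bool) (jj : 'I_n),
    (hasj -> (t < P jj.+1)%N) /\ (target <= #|TT n P t| + hasj)%N.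
Proof.
apply: Classical_Prop.NNPP => H.
have hT : forall t, (#|TT n P t| + [exists j : 'I_n, (t < P j.+1)%N] < target)%N.
  move=> t; rewrite ltnNge; apply/negP => ht; apply: H.
  case hb: [exists j : 'I_n, (t < P j.+1)%N].
    move: (hb) => /existsP [jj hjj]; exists t, true, jj; split => //.
    by move: ht; rewrite hb.
  by exists t, false, (Ordinal hn); split => //; move: ht; rewrite hb.
pose L := P n.
have hL : (1 <= L <= q)%N by case: hP => h _; apply: h; rewrite leqnn hn.
have hn1 : (n.-1 < n)%N by rewrite ltn_predL.
pose last : 'I_n := Ordinal hn1.
have hlast : P last.+1 = L by rewrite /= prednK.
have hTlt : forall t, (t < L)%N -> (#|TT n P t| + 2 <= target)%N.
  move=> t htL; have := hT t.
  have -> : [exists j : 'I_n, (t < P j.+1)%N] by apply/existsP; exists last; rewrite hlast.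
  by rewrite addn1 addn2.
have hTL : (#|TT n P L| < target)%N.
  by have := hT L; apply: leq_trans; rewrite ltnS leq_addr.
pose g t := #|[set i : 'I_n | (P i.+1 < t)%N]|.
have g1 : g 1%N = 0%N.
  apply/eqP; rewrite cards_eq0; apply/eqP/setP => i; rewrite !inE ltnS leqn0.
  case: hP => h _; have := h i.+1; rewrite ltn_ord /= => /(_ isT) /andP [h1 _].
  by apply/negP => /eqP e; rewrite e in h1.
have gL : g L.+1 = n.
  rewrite /g; have -> : [set i : 'I_n | (P i.+1 < L.+1)%N] = setT.
    by apply/setP => i; rewrite !inE ltnS (P_le_L hP).
  by rewrite cardsT card_ord.
have claim : forall M, (M < L)%N -> (g M.+1 + 2 * M <= target * M)%N.
  elim => [_|M IH hM]; first by rewrite g1.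
  move: (IH (ltnW hM)) (hTlt _ hM) (g_step M.+1) => h2 h1 e.
  rewrite -/(g M.+2) -/(g M.+1) in e; rewrite e mulnS; lia.
have := claim L.-1; rewrite prednK; last by case/andP: hL.
have hL1 : (L.-1 < L)%N by rewrite ltn_predL; case/andP: hL.
move=> /(_ (leqnn L)) h.
have hgL := gL; rewrite /g g_step -/(g L) in hgL.
have := harith L.-1; rewrite prednK; last by case/andP: hL.
move=> /(_ (proj2 (andP hL))) h'.
have hL0 : (0 < L)%N by case/andP: hL.
have eL : (target * L = target * L.-1 + target)%N.
  by rewrite -{1}(prednK hL0) mulnS addnC.
lia.
Qed.

End Comb.

Section LB.
Variables (R : realType) (n q : nat) (P : nat -> nat).

Lemma Xlt_all (hP : is_assignment n q P) (S : finType) (x : 'I_n -> S) :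
  Xlt P x (P n).+1 = pset x.
Proof.
apply/setP => e; apply/imsetP/imsetP => [][j hj ->]; exists j => //.
by rewrite inE ltnS (P_le_L hP).
Qed.

Lemma lb_inst (hP : is_assignment n q P) (hn : (0 < n)%N) (K c c' : nat)
  (hc : (c.+1 <= K)%N) (hc' : (c' <= K)%N)
  (hT : forall t, (t < P n)%N -> (#|[set i : 'I_n | P i.+1 == t]| <= c)%N)
  (hT' : (#|[set i : 'I_n | P i.+1 == P n]| <= c')%N)
  (S : finType) (blk : S -> 'I_n) (f : {set S} -> R) :
  in_F f -> valid_partition blk -> 0 < fopt blk f ->
  1 / K%:R <= gamma_inst P blk f.
Proof.
move=> hF hv hfo.
have hK : 0 < K%:R :> R by rewrite ltr0n (leq_trans _ hc).
have key : forall x, greedy P blk f x -> fopt blk f <= K%:R * f (pset x).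
  move=> x hg; apply: fopt_le => // o ho.
  have := greedy_bound hF hP hg ho hT hT'.
  rewrite Xlt_all // => h; apply: le_trans h _.
  case: (hF) => hnn _ hm _.
  set a := f (Xlt P x (P n)); set b := f (pset x).
  have ha : 0 <= a by apply: hnn.
  have hab : a <= b by rewrite /a /b -(Xlt_all hP x); apply: mono_sub => //; apply: Xlt_sub.
  have -> : K%:R * b = K%:R * a + K%:R * (b - a) by rewrite -mulrDr addrC subrK.
  apply: lerD; apply: ler_wpM2r; rewrite ?subr_ge0 ?ler_nat //.
have hs : fopt blk f / K%:R <= fsol P blk f.
  apply: (fsol_ge hP hv) => x hg; rewrite ler_pdivrMr // mulrC; exact: key.
rewrite /gamma_inst ler_pdivlMr //; apply: le_trans hs.
by rewrite mulrC mul1r.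
Qed.

End LB.

Lemma ceil_facts (n q : nat) : (0 < q)%N -> (q <= n)%N ->
  let r := ceil_div n q in
  [/\ (0 < r)%N, (n <= r * q)%N, (r * q < n + q)%N,
      (n == 1 %[mod q]) -> (n + q = r * q + 1)%N &
      ~~ (n == 1 %[mod q]) -> (n + q != r * q + 1)%N].
Proof.
move=> hq hqn r.
have hd := divn_eq (n + q).-1 q; have hm := ltn_pmod (n + q).-1 hq.
rewrite -/(ceil_div n q) -/r in hd.
have hnr : (n <= r * q)%N by lia.
have hrq : (r * q < n + q)%N by lia.
have hr : (0 < r)%N by case: (r) hnr => [|//]; rewrite mul0n; lia.
split => //.
  move=> /eqP hmod.
  case: (ltngtP q 1) => [|hq2|hq1]; first by lia.
    have e1 : (1 %% q = 1)%N by rewrite modn_small.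
    rewrite e1 in hmod; have hn := divn_eq n q; rewrite hmod in hn.
    set a := (n %/ q)%N in hn.
    have : r = a.+1.
      apply/eqP; rewrite eqn_leq; apply/andP; split.
        rewrite -ltnS -(ltn_pmul2r hq); lia.
      rewrite -(ltn_pmul2r hq); lia.
    move=> er; rewrite er mulSn; lia.
  by move: hnr hrq; rewrite hq1 !muln1; lia.
apply: contra => /eqP e.
have hs : (n = r.-1 * q + 1)%N.
  move: e; rewrite -{1}(prednK hr) mulSn; lia.
by rewrite hs modnMDl.
Qed.

Lemma ceil_div_S d i : (0 < d)%N -> ceil_div i.+1 d = (i %/ d).+1.
Proof.
move=> hd; rewrite /ceil_div addSn /= divnDr ?dvdnn // divnn hd addn1 //.
Qed.

Lemma card_inj_bound n (A : {set 'I_n}) (g : 'I_n -> nat) m :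
  {in A &, injective g} -> (forall i, i \in A -> (g i < m)%N) -> (#|A| <= m)%N.
Proof.
move=> hinj hlt; rewrite cardE -(size_map g) -(size_iota 0 m).
apply: uniq_leq_size.
  rewrite map_inj_in_uniq ?enum_uniq // => i j; rewrite !mem_enum; exact: hinj.
move=> y /mapP [i]; rewrite mem_enum => hi ->; rewrite mem_iota add0n /=.
exact: hlt.
Qed.

Lemma eq_div_mod (i j d : nat) : (i %/ d = j %/ d)%N -> (i %% d = j %% d)%N -> i = j.
Proof. by move=> h1 h2; rewrite (divn_eq i d) (divn_eq j d) h1 h2. Qed.

Section Pstar.
Variables (n q : nat) (hq : (0 < q)%N) (hqn : (q <= n)%N).

Let r := ceil_div n q.

Lemma PstarE i : Pstar n q i =
  if n == 1 %[mod q] then (if (i < n)%N then ceil_div i r.-1 else q) else ceil_div i r.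
Proof. by rewrite /Pstar subn1. Qed.

Lemma Pstar_range i : (1 <= i <= n)%N -> (1 <= Pstar n q i <= q)%N.
Proof.
case: (ceil_facts hq hqn) => hr hnr hrq heq hneq.
rewrite PstarE -/r => /andP [hi1 hin].
move: hnr hrq heq hneq; rewrite -(prednK hr); set s := r.-1 => hnr hrq heq hneq.
rewrite mulSn in hnr hrq heq.
case: ifP => hmod.
  have e := heq hmod; case: ifP => hi; last by rewrite hq leqnn.
  have hs : (0 < s)%N.
    case: (posnP s) => // hs0; move: e; rewrite hs0 mul0n; lia.
  rewrite /ceil_div divn_gt0 //; apply/andP; split; first lia.
  rewrite -ltnS ltn_divLR // mulSn [(q * s)%N]mulnC; lia.
have -> : r = s.+1 by rewrite /s prednK.
rewrite /ceil_div divn_gt0 //; apply/andP; split; first lia.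
rewrite -ltnS ltn_divLR // mulSn [(q * s.+1)%N]mulnC mulSn; lia.
Qed.

Lemma Pstar_assign : is_assignment n q (Pstar n q).
Proof.
split; first exact: Pstar_range.
move=> i j hi1 hij hjn.
have hr : (0 < r)%N by case: (ceil_facts hq hqn).
rewrite !PstarE -/r; case: ifP => hmod.
  case hj: (j < n)%N.
    rewrite (ltn_trans hij hj).
    by apply: leq_div2r; lia.
  have := Pstar_range (i := i); rewrite PstarE -/r hmod.
  move=> /(_ _) /andP [] //; first by rewrite hi1 /=; exact: ltnW (leq_trans hij hjn).
by apply: leq_div2r; lia.
Qed.

End Pstar.

Section PstarCard.
Variables (n q : nat) (hq : (0 < q)%N) (hqn : (q <= n)%N).

Let r := ceil_div n q.

Lemma r_pos : (0 < r)%N. Proof. by case: (ceil_facts hq hqn). Qed.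

Lemma s_pos (hmod : n == 1 %[mod q]) m : (m.+1 < n)%N -> (0 < r.-1)%N.
Proof.
rewrite /r; case: (ceil_facts hq hqn) => hr _ _ heq _; have e := heq hmod.
move: e; rewrite -(prednK hr) mulSn => e hm.
case: (posnP (ceil_div n q).-1) => // h0; move: e; rewrite h0 mul0n; lia.
Qed.

Lemma card_neq (hmod : ~~ (n == 1 %[mod q])) t :
  (#|[set i : 'I_n | Pstar n q i.+1 == t]| <= r)%N.
Proof.
have hr := r_pos.
apply: (card_inj_bound (g := fun i : 'I_n => (i %% r)%N)).
  move=> i j; rewrite !inE !PstarE -/r (negbTE hmod) !ceil_div_S //.
  move=> /eqP hi /eqP hj he; apply: val_inj; apply: (eq_div_mod (d := r)) => //.
  by apply: succn_inj; rewrite hi hj.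
by move=> i _; exact: ltn_pmod.
Qed.

Lemma card_eq_lt (hmod : n == 1 %[mod q]) t : (t < q)%N ->
  (#|[set i : 'I_n | Pstar n q i.+1 == t]| <= r.-1)%N.
Proof.
move=> ht.
have hlt : forall i : 'I_n, Pstar n q i.+1 == t -> (i.+1 < n)%N.
  move=> i; rewrite PstarE hmod; case: ifP => // _ /eqP e.
  by move: ht; rewrite -e ltnn.
apply: (card_inj_bound (g := fun i : 'I_n => (i %% r.-1)%N)).
  move=> i j; rewrite !inE => hi hj he.
  have hli := hlt _ hi; have hlj := hlt _ hj; have hs := s_pos hmod hli.
  move: hi hj; rewrite !PstarE hmod hli hlj !ceil_div_S // => /eqP hi /eqP hj.
  apply: val_inj; apply: (eq_div_mod (d := r.-1)) => //.
  by apply: succn_inj; rewrite hi hj.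
move=> i; rewrite inE => hi; apply: ltn_pmod; have hli := hlt _ hi; exact: (s_pos hmod hli).
Qed.

Lemma card_eq_q (hmod : n == 1 %[mod q]) :
  (#|[set i : 'I_n | Pstar n q i.+1 == q]| <= r)%N.
Proof.
have hr := r_pos.
apply: (card_inj_bound
  (g := fun i : 'I_n => if (i.+1 < n)%N then (i %% r.-1)%N else r.-1)).
  move=> i j; rewrite !inE !PstarE hmod.
  case hi: (i.+1 < n)%N; case hj: (j.+1 < n)%N.
  - have hs := s_pos hmod hi.
    rewrite !ceil_div_S // => /eqP ei /eqP ej he; apply: val_inj.
    apply: (eq_div_mod (d := r.-1)) => //; apply: succn_inj; by rewrite ei ej.
  - move=> _ _ he; have := ltn_pmod i (s_pos hmod hi); by rewrite he ltnn.
  - move=> _ _ he; have := ltn_pmod j (s_pos hmod hj); by rewrite -he ltnn.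
  - move=> _ _ _; apply: val_inj => /=; move/negbT: hi; move/negbT: hj; rewrite -!leqNgt; have := ltn_ord i; have := ltn_ord j; lia.
move=> i _; case: ifP => h.
  apply: leq_trans (ltn_pmod _ (s_pos hmod h)) _; exact: leq_pred.
by rewrite prednK.
Qed.

End PstarCard.

Theorem theorem1 (R : realType) (n q : nat) :
  (1 <= q)%N -> (q <= n)%N ->
  let r := ceil_div n q in
  let v : R := if n == 1 %[mod q] then 1 / r%:R else 1 / r.+1%:R in
  rho R n q = v /\ is_assignment n q (Pstar n q) /\ gammaP R n (Pstar n q) = v.
Proof.
move=> hq hqn; cbv zeta.
have [hr hnr hrq heq hneq] := ceil_facts hq hqn.
set r := ceil_div n q in hr hnr hrq heq hneq *.
set v : R := (if n == 1 %[mod q] then _ else _).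
have hn : (0 < n)%N by exact: leq_trans hq hqn.
pose K := if n == 1 %[mod q] then r else r.+1.
have hK1 : (0 < K)%N by rewrite /K; case: ifP.
have hv : v = 1 / K%:R by rewrite /v /K; case: ifP.
have hPA := Pstar_assign hq hqn.
have harith : forall M, (M < q)%N -> (K * M.+1 < n + 2 * M + 1)%N.
  move=> M hM; have hsM := leq_mul (leqnn r.-1) hM.
  move: hnr hrq heq hneq; rewrite /K -(prednK hr) mulSn => hnr hrq heq hneq.
  case: ifP => hmod.
    have e := heq hmod; rewrite mulSn; lia.
  have e := hneq (negbT hmod); rewrite !mulSn; lia.
have UB : forall P, is_assignment n q P -> gammaP R n P <= v.
  move=> P hP; have [t [hasj [jj [hj hKt]]]] := round_exists hP hn harith.
  have hm0 : (0 < #|TT n P t| + hasj)%N := leq_trans hK1 hKt.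
  apply: le_trans (gammaP_le R hP hj hm0) _.
  by rewrite hv !div1r lef_pV2 ?posrE ?ltr0n // ler_nat.
have hPn : n == 1 %[mod q] -> Pstar n q n = q by move=> hmod; rewrite PstarE hmod ltnn.
have LBi : forall (S : finType) (blk : S -> 'I_n) (f : {set S} -> R),
    in_F f -> valid_partition blk -> 0 < fopt blk f -> v <= gamma_inst (Pstar n q) blk f.
  move=> S blk f hF hvp hfo; rewrite hv /K.
  case hmod: (n == 1 %[mod q]).
    apply: (lb_inst hPA hn (c := r.-1) (c' := r)) => //.
    - by rewrite prednK.
    - by move=> t; rewrite hPn // => ht; apply: card_eq_lt.
    - by rewrite hPn //; apply: card_eq_q.
  apply: (lb_inst hPA hn (c := r) (c' := r)) => //.
  - by move=> t _; apply: card_neq => //; rewrite hmod.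
  - by apply: card_neq => //; rewrite hmod.
have h1 : forall M, (M < q)%N -> (1 * M.+1 < n + 2 * M + 1)%N by move=> M _; lia.
have [t0 [hj0 [jj0 [hjj0 hm0]]]] := round_exists hPA hn h1.
have [hfo0 _] := inst_gamma R hPA hjj0 hm0.
have gP : gammaP R n (Pstar n q) = v.
  apply/eqP; rewrite eq_le UB //=.
  apply: lb_le_inf.
    exists (gamma_inst (Pstar n q) (@blkI n) (fI R (Pstar n q) t0 hj0 jj0)).
    exists _, (@blkI n), (fI R (Pstar n q) t0 hj0 jj0); split => //.
    - exact: cf_inF.
    - exact: validI.
  by move=> y [S [blk [f [hF hvp hfo ->]]]]; exact: LBi.
split; last by split.
apply/eqP; rewrite eq_le; apply/andP; split.
  apply: ge_sup; first by exists (gammaP R n (Pstar n q)); exists (Pstar n q).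
  by move=> y [P hP <-]; exact: UB.
rewrite -{1}gP; apply: ub_le_sup; last by exists (Pstar n q).
by exists v => y [P hP <-]; exact: UB.
Qed.
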